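(* Let $E$ be a nonempty set and $\mathcal{E}$ a prepaving on $E$. Every maxitive measure $\nu$ on $\mathcal{E}$ is alternating (of infinite order), i.e. for all integers $n\geq 1$ and all $G,G_1,\dots,G_n\in\mathcal{E}$, \[ (-1)^{n+1}\,\Delta_{G_1}\cdots\Delta_{G_n}\nu(G)\geq 0 . \]
   Context: A prepaving on $E$ is a collection of subsets of $E$ containing $\emptyset$ and closed under finite unions. A maxitive measure on $\mathcal{E}$ is a map $\nu:\mathcal{E}\to[0,\infty]$ with $\nu(\emptyset)=0$ and $\nu(G\cup G')=\max(\nu(G),\nu(G'))$ for all $G,G'\in\mathcal{E}$. For a map $f:\mathcal{E}\to\mathbb{R}\cup\{\pm\infty\}$, define $\Delta_{G_1}f(G)=f(G\cup G_1)-f(G)$ and $\Delta_{G_1}\cdots\Delta_{G_n}f(G)$ by iterating this formula (applying $\Delta_{G_1}$ to the function $G\mapsto\Delta_{G_2}\cdots\Delta_{G_n}f(G)$), with the conventions $-\infty+\infty=\infty-\infty=0$. *)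

(* Defs.v *)
From mathcomp Require Import all_boot all_order all_algebra.
From mathcomp Require Import all_classical all_reals.
Set Implicit Arguments. Unset Strict Implicit. Unset Printing Implicit Defensive.
Import Order.TTheory GRing.Theory Num.Theory.
Local Open Scope classical_set_scope.
Local Open Scope ereal_scope.

Definition prepaving (E : Type) (P : set (set E)) : Prop :=
  P set0 /\ (forall G G', P G -> P G' -> P (G `|` G')).

Definition maxitive_measure (E : Type) (R : realType) (P : set (set E))
    (nu : set E -> \bar R) : Prop :=
  (forall G, P G -> 0 <= nu G) /\ nu set0 = 0 /\
  (forall G G', P G -> P G' -> nu (G `|` G') = maxe (nu G) (nu G')).

Definition conv_sub (R : realType) (x y : \bar R) : \bar R :=
  if ((x == +oo) && (y == +oo)) || ((x == -oo) && (y == -oo)) then 0 else x - y.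

(* Iterated difference: Delta [:: G1; ...; Gn] f G = Delta_{G1} ... Delta_{Gn} f (G). *)
Fixpoint Delta (E : Type) (R : realType) (Gs : seq (set E))
    (f : set E -> \bar R) (G : set E) : \bar R :=
  match Gs with
  | [::] => f G
  | G1 :: Gs' => conv_sub (Delta Gs' f (G `|` G1)) (Delta Gs' f G)
  end.

(* Main.v *)
Require Import Defs.
From mathcomp Require Import all_boot all_order all_algebra.
From mathcomp Require Import all_classical all_reals.
From mathcomp Require Import lra.
Import Order.TTheory GRing.Theory Num.Theory.
Local Open Scope classical_set_scope.
Local Open Scope ereal_scope.

Ltac splitr := match goal with |- context [ (?x < ?y)%R ] => case: (ltP x y) => ? end.
Definition hh {R : realType} (m a : \bar R) : \bar R := if a < m then m - a else 0.

Lemma yltF {R : realType} (x : \bar R) : (+oo < x) = false. Proof. by rewrite ltNge leey. Qed.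
Lemma ltNyF {R : realType} (x : \bar R) : (x < -oo) = false. Proof. by rewrite ltNge leNye. Qed.
Lemma Nyy {R : realType} : (-oo < (+oo : \bar R)) = true. Proof. by []. Qed.

Lemma core {R : realType} (m a b : \bar R) :
  conv_sub (hh m a) (hh m (maxe a b)) =
  if (m != +oo) || (b == +oo) then hh (mine b m) a else 0.
Proof.
rewrite /hh /conv_sub.
case: a => [a| |]; case: b => [b| |]; case: m => [m| |] => //=;
rewrite /maxe /mine /= ?lte_fin ?ltry ?ltNyr ?yltF ?ltNyF ?Nyy /=;
repeat (splitr; rewrite /= ?lte_fin ?ltry ?ltNyr ?yltF ?ltNyF ?Nyy);
rewrite /= ?ltry /= ?eqxx /= ?orbT ?orbF ?addye // ?addey // ?addNye ?addeNy /= ?eqxx /= ?orbT;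
rewrite ?oppr0 ?adde0 ?add0e ?sube0 ?sub0e -?EFinD -?EFinN ?oppr0 ?adde0 ?add0e; 
try (by congr (_%:E); lra); try (by exfalso; lra).
all: rewrite ?ltry /= ?eqxx //.
Qed.

Lemma base {R : realType} (a b : \bar R) : conv_sub (maxe a b) a = hh b a.
Proof.
rewrite /hh /conv_sub.
case: a => [a| |]; case: b => [b| |] => //=;
rewrite /maxe /= ?lte_fin ?ltry ?ltNyr ?yltF ?ltNyF ?Nyy /=;
repeat (splitr; rewrite /= ?lte_fin ?ltry ?ltNyr ?yltF ?ltNyF ?Nyy);
rewrite /= ?ltry /= ?eqxx /= ?orbT ?orbF ?addye // ?addey // ?addNye ?addeNy /= ?eqxx /= ?orbT;
rewrite ?oppr0 ?adde0 ?add0e ?sube0 ?sub0e -?EFinD -?EFinN ?oppr0 ?adde0 ?add0e;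
try (by congr (_%:E); lra); try (by exfalso; lra).
all: rewrite ?ltry /= ?eqxx //.
Qed.

Lemma hh_ge0 {R : realType} (m a : \bar R) : 0 <= hh m a.
Proof.
rewrite /hh; case: ifP => // h.
move: m a h => [m| |] [a| |] //= h; rewrite ?lte_fin ?lee_fin in h *; rewrite ?subr_ge0 ?ltW //; rewrite ?addey ?addye // ?leey //.
all: by rewrite ?(ltry 0%R) ?leey.
Qed.

Lemma sgn {R : realType} k : ((-1) ^+ k = (1:R) \/ (-1) ^+ k = (-1 : R))%R.
Proof. rewrite -signr_odd; case: odd; [right; exact: expr1 | left; exact: expr0]. Qed.

Lemma convsgn {R : realType} k (X Y : \bar R) : 0 <= X -> 0 <= Y ->
  conv_sub (((-1) ^+ k)%:E * X) (((-1) ^+ k)%:E * Y) =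
  (((-1) ^+ k.+1)%:E) * conv_sub Y X.
Proof.
move=> hX hY; rewrite exprS.
case: (sgn (R:=R) k) => ->; rewrite ?mulr1 ?mulrN1 ?opprK ?mul1e ?mulN1e /conv_sub;
move: X Y hX hY => [x| |] [y| |] //= hx hy;
rewrite ?lee_fin in hx hy; rewrite /= ?eqxx /=;
rewrite ?oppr0 //; rewrite -?EFinD -?EFinN; congr (_%:E); lra.
Qed.

Fixpoint gg {R : realType} (bs : seq (\bar R)) (a : \bar R) : \bar R :=
  match bs with
  | [::] => a
  | b :: bs' => conv_sub (gg bs' (maxe a b)) (gg bs' a)
  end.

Definition mm {R : realType} (bs : seq (\bar R)) : \bar R := foldr mine +oo bs.

Lemma gform {R : realType} (bs : seq (\bar R)) : bs != [::] ->
  exists c : bool, forall a,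
    gg bs a = ((-1) ^+ (size bs).+1)%:E * (if c then hh (mm bs) a else 0).
Proof.
elim: bs => [//|b bs IH] _.
case: bs IH => [|b' bs] IH.
  exists true => a /=; rewrite expr2 mulrN1 opprK mul1e /mm /= base.
  by rewrite /mine; case: b => [b| |] //=; rewrite ?ltry.
have [c Hc] := IH isT.
exists (c && ((mm (b' :: bs) != +oo) || (b == +oo))) => a.
change (gg (b :: b' :: bs) a) with (conv_sub (gg (b'::bs) (maxe a b)) (gg (b'::bs) a)).
rewrite !Hc convsgn; last 2 first.
- by case: (c) => //; exact: hh_ge0.
- by case: (c) => //; exact: hh_ge0.
congr (_ * _).
case: (c) => /=; last by rewrite /conv_sub /= ?eqxx ?subee.
exact: core.
Qed.

Lemma Delta_gg (E : Type) (R : realType) (P : set (set E)) (nu : set E -> \bar R) :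
  prepaving P -> maxitive_measure P nu ->
  forall Gs G, P G -> (forall H, H \in Gs -> P H) ->
  Delta Gs nu G = gg (map nu Gs) (nu G).
Proof.
move=> [P0 PU] [_ [_ numax]].
elim=> [//|G1 Gs IH] G PG PGs /=.
have PG1 : P G1 by apply: PGs; rewrite in_cons eqxx.
have PGs' : forall H, H \in Gs -> P H by move=> H HG; apply: PGs; rewrite in_cons HG orbT.
by rewrite IH ?IH // ?numax //; apply: PU.
Qed.

Theorem proposition2p2 (E : Type) (R : realType) (P : set (set E))
    (nu : set E -> \bar R) :
  (exists e : E, True) ->
  prepaving P -> maxitive_measure P nu ->
  forall (n : nat) (Gs : seq (set E)) (G : set E),
    (1 <= n)%N -> size Gs = n -> P G -> (forall H, H \in Gs -> P H) ->
    0 <= (((-1) ^+ n.+1)%R)%:E * Delta Gs nu G.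
Proof.
move=> _ Hp Hm n Gs G n1 sGs PG PGs.
rewrite (@Delta_gg E R P nu Hp Hm Gs G PG PGs).
have ne : map nu Gs != [::] by move: sGs n1; case: (Gs) => //= <-.
have [c Hc] := gform _ ne.
rewrite Hc size_map sGs muleA -EFinM.
have -> : ((-1) ^+ n.+1 * (-1) ^+ n.+1 = 1 :> R)%R.
  by case: (sgn (R:=R) n.+1) => ->; rewrite ?mulr1 ?mulrNN ?mulr1.
rewrite mul1e; case: (c) => //; exact: hh_ge0.
Qed.
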